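(* In the setting described in the context, there exists $z^*\in\arg\min_{c'\in[K]\setminus\{c^*\}} P_2(c')$ such that $P_1(z^* )=P_2(z^* )$.
   Context: Let $N_p\ge 1$ and $K\ge 2$ be integers, and write $[m]=\{1,\dots,m\}$. Let real numbers $\rho_i^c$ be given for $i\in[N_p]$ and $c\in[K]$. A vote configuration is a matrix $\tilde V=(\tilde v_i^c)\in\{0,1\}^{N_p\times K}$ with $\sum_{c=1}^K \tilde v_i^c=1$ for every $i\in[N_p]$. Its cost is $O(\tilde V)=\sum_{i=1}^{N_p}\sum_{c=1}^K \rho_i^c\,\tilde v_i^c$. Let $\mathrm{majVote}(\tilde V)$ denote the smallest index among the maximizers of $c\mapsto \sum_{i=1}^{N_p}\tilde v_i^c$. Fix a class $c^*\in[K]$. For $c'\in[K]$ define: - $P_1(c')=\min\{O(\tilde V): \tilde V \text{ a vote configuration with } \sum_{i=1}^{N_p}(\tilde v_i^{c'}-\tilde v_i^{c})\ge \mathbf 1_{c<c'}\ \forall c\in[K]\setminus\{c'\}\}$. The constraint is equivalent to $\mathrm{majVote}(\tilde V)=c'$. - $P_2(c')=\min\{O(\tilde V): \tilde V \text{ a vote configuration with } \sum_{i=1}^{N_p}(\tilde v_i^{c'}-\tilde v_i^{c^*})\ge \mathbf 1_{c^*<c'}\}$. Here $\mathbf 1_{a<b}$ equals $1$ if $a<b$ and $0$ otherwise. *)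

(* Defs.v *)
From HB Require Import structures.
From mathcomp Require Import all_boot all_order all_algebra.
Set Implicit Arguments. Unset Strict Implicit. Unset Printing Implicit Defensive.
Import Order.TTheory GRing.Theory Num.Theory.
Local Open Scope ring_scope.

(* A candidate vote matrix: entries in {0,1} (booleans, read as 0/1 via nat_of_bool). *)
Definition voteMx (Np K : nat) := 'M[bool]_(Np, K).

Definition is_vote_config (Np K : nat) (V : voteMx Np K) : bool :=
  [forall i : 'I_Np, (\sum_(c < K) (V i c : nat))%N == 1%N].

Definition cost (R : realFieldType) (Np K : nat) (rho : 'I_Np -> 'I_K -> R)
  (V : voteMx Np K) : R :=
  \sum_(i < Np) \sum_(c < K) rho i c * (V i c : nat)%:R.

Definition votes (Np K : nat) (V : voteMx Np K) (c : 'I_K) : int :=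
  (\sum_(i < Np) (V i c : nat))%:Z.

Definition all_vote (Np K : nat) (c' : 'I_K) : voteMx Np K :=
  \matrix_(i, c) (c == c').

Definition feas1 (Np K : nat) (c' : 'I_K) (V : voteMx Np K) : bool :=
  is_vote_config V &&
  [forall c : 'I_K, (c != c') ==> (votes V c' - votes V c >= ((c < c')%N : nat)%:Z)].

Definition feas2 (Np K : nat) (cstar c' : 'I_K) (V : voteMx Np K) : bool :=
  is_vote_config V &&
  (votes V c' - votes V cstar >= ((cstar < c')%N : nat)%:Z).

(* Minimum of the cost over a finite feasible set; all_vote c' is feasible for
   both problems, so using its cost as the seed yields exactly the minimum. *)
Definition P1 (R : realFieldType) (Np K : nat) (rho : 'I_Np -> 'I_K -> R)
  (c' : 'I_K) : R :=
  \big[Num.min/cost rho (all_vote Np c')]_(V : voteMx Np K | feas1 c' V) cost rho V.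

Definition P2 (R : realFieldType) (Np K : nat) (rho : 'I_Np -> 'I_K -> R)
  (cstar c' : 'I_K) : R :=
  \big[Num.min/cost rho (all_vote Np c')]_(V : voteMx Np K | feas2 cstar c' V) cost rho V.

(* Main.v *)
Require Import Defs.
From HB Require Import structures.
From mathcomp Require Import all_boot all_order all_algebra.
From mathcomp Require Import zify.
Import Order.TTheory GRing.Theory Num.Theory.
Local Open Scope ring_scope.

Lemma bigmin_attain (R : realFieldType) (I : finType) (P : pred I) (F : I -> R) (x : R) :
  \big[Num.min/x]_(i | P i) F i = x \/ exists i, P i /\ \big[Num.min/x]_(i | P i) F i = F i.
Proof.
elim/big_ind: _.
- by left.
- by move=> a b Ha Hb; case: (leP a b).
- by move=> i Pi; right; exists i.
Qed.

Lemma P2_le_P1 (R : realFieldType) (Np K : nat) (rho : 'I_Np -> 'I_K -> R) (cstar z : 'I_K) :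
  z != cstar -> P2 rho cstar z <= P1 rho z.
Proof.
move=> hz; apply: le_bigmin; first exact: bigmin_le_id.
move=> V /andP [hV /forallP hc]; apply: bigmin_le_cond.
by rewrite /feas2 hV /=; have := hc cstar; rewrite eq_sym hz.
Qed.

Theorem lemma1p3 (R : realFieldType) (Np K : nat) (hNp : (1 <= Np)%N) (hK : (2 <= K)%N)
  (rho : 'I_Np -> 'I_K -> R) (cstar : 'I_K) :
  exists zstar : 'I_K,
    [/\ zstar != cstar,
        (forall c' : 'I_K, c' != cstar -> P2 rho cstar zstar <= P2 rho cstar c') &
        P1 rho zstar = P2 rho cstar zstar].
Proof.
have [c0 hc0] : exists c0 : 'I_K, c0 != cstar.
  have h1 : (1 < K)%N by [].
  case: (eqVneq cstar (Ordinal h1)) => h.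
  - have h0 : (0 < K)%N by lia.
    exists (Ordinal h0); apply/eqP => /(congr1 val); rewrite h /=; lia.
  - by exists (Ordinal h1); rewrite eq_sym.
case: (@arg_minP _ _ _ c0 (fun c => c != cstar) (fun c => P2 rho cstar c) hc0) => /= zz hz hmin.
have [Hseed | [V [hfV HV]]] := @bigmin_attain R (voteMx Np K) (feas2 cstar zz) (cost rho) (cost rho (all_vote Np zz)).
  exists zz; split => //; apply/eqP; rewrite eq_le P2_le_P1 // andbT.
  rewrite /P2 in Hseed; rewrite /P2 Hseed; exact: bigmin_le_id.
pose n (c : 'I_K) := (\sum_(i < Np) (V i c : nat))%N.
pose score (c : 'I_K) := (n c * K + (K - c))%N.
case: (@arg_maxnP _ c0 xpredT score isT) => d _ hd.
have key : forall c : 'I_K, c != d -> (n c + ((c < d)%N : nat) <= n d)%N.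
  move=> c hcd; have := hd c isT; rewrite /score.
  have hcK := ltn_ord c; have hdK := ltn_ord d.
  have hne : (c : nat) <> d by move=> e; move/eqP: hcd; apply; exact: val_inj.
  case: (ltngtP c d) => hcd' //= hle.
  - have : ~ (n d <= n c)%N.
      move=> hh; have : (n d * K <= n c * K)%N by exact: leq_mul.
      lia.
    lia.
  - have : ~ (n d < n c)%N.
      move=> hh; have : ((n d).+1 * K <= n c * K)%N by exact: leq_mul.
      rewrite mulSn; lia.
    lia.
move: hfV => /andP [hcV hV2].
have hV2' : (n cstar + ((cstar < zz)%N : nat) <= n zz)%N.
  move: hV2; rewrite /votes -/(n zz) -/(n cstar); lia.
have hdc : d != cstar.
  apply/eqP => edc; subst d.
  case: (eqVneq zz cstar) => [e|hne]; first by rewrite e eqxx in hz.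
  have := key zz hne; have := ltn_ord zz; have := ltn_ord cstar.
  have : (zz : nat) <> cstar by move=> e; move/eqP: hne; apply; exact: val_inj.
  move: hV2'; case: (ltngtP zz cstar) => /= h; move=> *; lia.
have f2 : feas2 cstar d V.
  rewrite /feas2 hcV /= /votes -/(n d) -/(n cstar).
  have hcd : cstar != d by rewrite eq_sym.
  have := key cstar hcd; lia.
have f1 : feas1 d V.
  rewrite /feas1 hcV /=; apply/forallP => c; apply/implyP => hc.
  rewrite /votes -/(n d) -/(n c); have := key c hc; lia.
have hP2d : P2 rho cstar d <= cost rho V by exact: bigmin_le_cond.
have HV' : P2 rho cstar zz = cost rho V by exact: HV.
have hP2eq : P2 rho cstar d = P2 rho cstar zz.
  by apply/eqP; rewrite eq_le hmin // andbT HV'.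
exists d; split => //.
- by move=> c' hc'; rewrite hP2eq; exact: hmin.
- apply/eqP; rewrite eq_le P2_le_P1 // andbT hP2eq HV'.
  exact: bigmin_le_cond.
Qed.
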